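(* Let $\varepsilon>0$ and $\delta\in(0,1]$, and let $\pi_{\mathrm{opt}}$ be the optimal partition selection primitive for $(\varepsilon,\delta)$-differential privacy, i.e. the function $\mathbb{N}\to[0,1]$ given by $\pi_{\mathrm{opt}}(0)=0$ and $\pi_{\mathrm{opt}}(n+1)=\min\left(e^{\varepsilon}\pi_{\mathrm{opt}}(n)+\delta,\;1-e^{-\varepsilon}(1-\pi_{\mathrm{opt}}(n)-\delta),\;1\right)$ for $n\ge0$. Then there exist integers $n_1,n_2$ with $0<n_1\le n_2$ such that: $\pi_{\mathrm{opt}}(n)=e^{\varepsilon}\pi_{\mathrm{opt}}(n-1)+\delta$ for $0<n\le n_1$; $\pi_{\mathrm{opt}}(n)=1-e^{-\varepsilon}\left(1-\pi_{\mathrm{opt}}(n-1)-\delta\right)$ for $n_1<n\le n_2$; and $\pi_{\mathrm{opt}}(n)=1$ for $n>n_2$.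
   Context: $\mathbb{N}=\{0,1,2,\dots\}$. (The recurrence given characterizes the maximal function $\pi:\mathbb{N}\to[0,1]$ with $\pi(0)=0$ such that releasing a partition with $n$ users with probability $\pi(n)$ is $(\varepsilon,\delta)$-differentially private with respect to adding or removing one user.) *)

(* Defs.v *)
From Stdlib Require Import Reals.
Open Scope R_scope.

Fixpoint pi_opt (eps delta : R) (n : nat) : R :=
  match n with
  | O => 0
  | S m =>
      let p := pi_opt eps delta m in
      Rmin (Rmin (exp eps * p + delta) (1 - exp (- eps) * (1 - p - delta))) 1
  end.

(* Main.v *)
Require Import Defs.
From Stdlib Require Import Reals Lra Lia Classical ZArith.
Open Scope R_scope.

Lemma exists_nat_gt (x : R) : exists n : nat, x < INR n.
Proof.
  destruct (archimed x) as [H1 _].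
  destruct (Z_le_gt_dec (up x) 0) as [Hl|Hg].
  - exists 0%nat. simpl. apply IZR_le in Hl. lra.
  - exists (Z.to_nat (up x)). rewrite INR_IZR_INZ, Z2Nat.id by lia. lra.
Qed.

Lemma min_exists (P : nat -> Prop) : (exists n, P n) ->
  exists n, P n /\ forall m, (m < n)%nat -> ~ P m.
Proof.
  intros [n Hn].
  assert (H : forall N n, (n <= N)%nat -> P n -> exists k, P k /\ forall m, (m < k)%nat -> ~ P m).
  { induction N as [|N IH]; intros k Hk Pk.
    - exists k. split; [auto|]. intros; lia.
    - destruct (classic (exists m, (m < k)%nat /\ P m)) as [[m [Hm Pm]]|Hno].
      + apply (IH m); [lia|auto].
      + exists k. split; [auto|]. intros m Hm Pm. apply Hno. eauto. }
  eapply H; eauto.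
Qed.

Lemma rmin3 (x y z : R) : let m := Rmin (Rmin x y) z in
  m <= x /\ m <= y /\ m <= z /\ (m = x \/ m = y \/ m = z).
Proof. unfold Rmin; repeat destruct Rle_dec; simpl; lra. Qed.

Section S.
Variables eps delta : R.
Hypothesis Heps : 0 < eps.
Hypothesis Hd : 0 < delta <= 1.
Let a := exp eps.
Let b := exp (- eps).
Let p := pi_opt eps delta.
Let f x := a * x + delta.
Let g x := 1 - b * (1 - x - delta).

Lemma ab : a * b = 1 /\ 1 < a /\ 0 < b /\ b < 1.
Proof.
  unfold a, b. rewrite <- exp_plus. replace (eps + - eps) with 0 by ring.
  rewrite exp_0. split; [auto|]. split; [|split].
  - rewrite <- exp_0. apply exp_increasing; lra.
  - apply exp_pos.
  - rewrite <- exp_0. apply exp_increasing; lra.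
Qed.

Lemma step n : p (S n) <= f (p n) /\ p (S n) <= g (p n) /\ p (S n) <= 1 /\
  (p (S n) = f (p n) \/ p (S n) = g (p n) \/ p (S n) = 1).
Proof. exact (rmin3 _ _ _). Qed.

Lemma bounds n : 0 <= p n <= 1.
Proof.
  destruct ab as [H1 [H2 [H3 H4]]].
  induction n as [|n IH].
  - unfold p; simpl; lra.
  - destruct (step n) as [A [B [C D]]]. split; [|lra].
    unfold f, g in *.
    assert (b * (1 - p n - delta) <= b * 1) by (apply Rmult_le_compat_l; lra).
    assert (0 <= a * p n) by (apply Rmult_le_pos; lra).
    lra.
Qed.

Lemma persist1 n : p n = 1 -> p (S n) = 1.
Proof.
  destruct ab as [H1 [H2 [H3 H4]]].
  intros E. destruct (step n) as [A [B [C D]]]. unfold f, g in *. rewrite E in *.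
  assert (0 < b * delta) by (apply Rmult_lt_0_compat; lra).
  lra.
Qed.

Lemma persist n d : p n = 1 -> p (d + n)%nat = 1.
Proof. intros E; induction d; simpl; auto using persist1. Qed.

Lemma notF1 n : p (S n) <> f (p n) -> p (S (S n)) <> f (p (S n)).
Proof.
  destruct ab as [H1 [H2 [H3 H4]]].
  intros NF. destruct (step n) as [A [B [C D]]].
  destruct (step (S n)) as [A' [B' [C' D']]].
  destruct (bounds n), (bounds (S n)).
  unfold f, g in *.
  destruct (Req_dec (p (S n)) 1) as [E|E].
  - rewrite E in *. lra.
  - assert (Hg : p (S n) = g (p n)) by (unfold g; lra).
    unfold g in Hg.
    assert (Hq : p n <= p (S n)).
    { assert ((1 - b) * (1 - p n) >= 0) by (apply Rle_ge, Rmult_le_pos; lra).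
      assert (0 < b * delta) by (apply Rmult_lt_0_compat; lra). nra. }
    assert (b < a) by lra.
    assert ((a - b) * (p (S n) - p n) >= 0) by (apply Rle_ge, Rmult_le_pos; lra).
    nra.
Qed.

Lemma notF n d : p (S n) <> f (p n) -> p (S (d + n)) <> f (p (d + n)%nat).
Proof.
  intros H; induction d; simpl; auto.
  apply notF1; auto.
Qed.

Lemma grow n : p (S n) = 1 \/ p (S n) >= p n + b * delta.
Proof.
  destruct ab as [H1 [H2 [H3 H4]]].
  destruct (step n) as [A [B [C D]]]. destruct (bounds n).
  unfold f, g in *.
  destruct D as [D|[D|D]]; auto; right; rewrite D.
  - assert (a * p n >= p n) by nra. nra.
  - assert ((1 - b) * (1 - p n) >= 0) by (apply Rle_ge, Rmult_le_pos; lra). nra.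
Qed.

Lemma lower n : p n = 1 \/ p n >= INR n * (b * delta).
Proof.
  induction n as [|n IH].
  - right. unfold p; simpl; lra.
  - destruct IH as [E|E].
    + left. apply persist1; auto.
    + destruct (grow n) as [G|G]; auto. right. rewrite S_INR. lra.
Qed.

Lemma reach : exists m, p m = 1.
Proof.
  destruct ab as [H1 [H2 [H3 H4]]].
  assert (0 < b * delta) by (apply Rmult_lt_0_compat; lra).
  destruct (exists_nat_gt (/ (b * delta))) as [m Hm].
  exists m. destruct (lower m) as [E|E]; auto.
  destruct (bounds m).
  assert (INR m * (b * delta) > 1).
  { apply Rmult_lt_compat_r with (r := b * delta) in Hm; auto.
    rewrite Rinv_l in Hm by lra. lra. }
  lra.
Qed.

Lemma p1 : p 1 = delta.
Proof.
  destruct ab as [H1 [H2 [H3 H4]]].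
  destruct (step 0) as [A [B [C D]]]. unfold f, g in *.
  replace (p 0) with 0 in * by reflexivity.
  assert (b * (1 - 0 - delta) <= 1 - delta) by nra.
  lra.
Qed.

Lemma at1 n : p n = 1 -> p (S n) <> f (p n) /\ p (S n) <> g (p n).
Proof.
  destruct ab as [H1 [H2 [H3 H4]]].
  intros E. pose proof (persist1 n E) as E'. unfold f, g. rewrite E, E'.
  assert (0 < b * delta) by (apply Rmult_lt_0_compat; lra). lra.
Qed.

End S.

Theorem lemma2 (eps delta : R) (Heps : 0 < eps) (Hdelta : 0 < delta <= 1) :
  exists n1 n2 : nat,
    (0 < n1)%nat /\ (n1 <= n2)%nat /\
    (forall n : nat, (0 < n <= n1)%nat ->
       pi_opt eps delta n = exp eps * pi_opt eps delta (n - 1) + delta) /\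
    (forall n : nat, (n1 < n <= n2)%nat ->
       pi_opt eps delta n =
         1 - exp (- eps) * (1 - pi_opt eps delta (n - 1) - delta)) /\
    (forall n : nat, (n2 < n)%nat -> pi_opt eps delta n = 1).
Proof.
  pose proof (at1 eps delta Heps Hdelta) as At.
  pose proof (notF eps delta Heps Hdelta) as NFm.
  pose proof (persist eps delta Heps Hdelta) as Per.
  pose proof (step eps delta) as St.
  pose proof (p1 eps delta Heps Hdelta) as P1.
  cbv beta in At, NFm, Per, St, P1.
  set (p := pi_opt eps delta) in *.
  set (F := fun k => p k = exp eps * p (k - 1)%nat + delta).
  set (G := fun k => p k = 1 - exp (- eps) * (1 - p (k - 1)%nat - delta)).
  destruct (reach eps delta Heps Hdelta) as [m Hm]. fold p in Hm.
  destruct (min_exists (fun k => (1 <= k)%nat /\ ~ F k)) as [k0 [[Hk0 NF0] Min0]].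
  { exists (S m). split; [lia|]. unfold F. replace (S m - 1)%nat with m by lia.
    apply At; auto. }
  assert (Hk0' : k0 <> 1%nat).
  { intro E; subst k0. apply NF0. unfold F. simpl. rewrite P1. unfold p; simpl; ring. }
  set (n1 := (k0 - 1)%nat).
  set (M := (m + k0)%nat).
  assert (HM : p M = 1) by (unfold M; rewrite Nat.add_comm; apply Per; auto).
  destruct (min_exists (fun k => (n1 < k)%nat /\ ~ G k)) as [k1 [[Hk1 NG1] Min1]].
  { exists (S M). split; [unfold n1, M; lia|]. unfold G. replace (S M - 1)%nat with M by lia.
    apply At; auto. }
  exists n1, (k1 - 1)%nat.
  split; [unfold n1; lia|]. split; [unfold n1 in *; lia|].
  split; [|split].
  - intros n Hn. destruct (classic (F n)) as [H|H]; auto.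
    exfalso. apply (Min0 n); [unfold n1 in *; lia|]. split; [lia|auto].
  - intros n Hn. destruct (classic (G n)) as [H|H]; auto.
    exfalso. apply (Min1 n); [lia|]. split; [lia|auto].
  - intros n Hn.
    assert (Hp1 : p k1 = 1).
    { assert (NF1 : ~ F k1).
      { destruct k0 as [|k0']; [lia|].
        replace k1 with (S ((k1 - S k0') + k0')) by (unfold n1 in *; lia).
        unfold F. replace (S (k1 - S k0' + k0') - 1)%nat with ((k1 - S k0') + k0')%nat by lia.
        apply NFm. unfold F in NF0. replace (S k0' - 1)%nat with k0' in NF0 by lia. exact NF0. }
      destruct k1 as [|k1']; [lia|].
      unfold F, G in NF1, NG1. replace (S k1' - 1)%nat with k1' in NF1, NG1 by lia.
      destruct (St k1') as [_ [_ [_ [D|[D|D]]]]]; tauto. }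
    replace n with ((n - k1) + k1)%nat by lia. apply Per; auto.
Qed.
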